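(* There is a positive existential formula $\varphi(x,y)$ in the language $\mathcal{L}_z=\{0,1,+,\cdot,z\}$ such that for every field $F$, in the ring $F[z]$ (with $0,1,+,\cdot$ interpreted as usual and the constant symbol $z$ interpreted as the variable $z$) and for all $x,y\in F[z]$, $F[z]$ satisfies $\varphi(x,y)$ if and only if $x\neq y$. That is, the relation $\neq$ is uniformly positive existentially $\mathcal{L}_z$-definable in the class of all polynomial rings in one variable over fields.
   Context: A relation is uniformly positive existentially $\mathcal{L}$-definable in a class of $\mathcal{L}$-structures if a single positive existential $\mathcal{L}$-formula defines it in every structure of the class. *)

(* Defs.v *)
From HB Require Import structures.
From mathcomp Require Import all_boot all_order all_algebra.
Set Implicit Arguments. Unset Strict Implicit. Unset Printing Implicit Defensive.
Import GRing.Theory.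
Local Open Scope ring_scope.

Inductive lz_term : Type :=
  | TVar of nat
  | TZero
  | TOne
  | TZ
  | TAdd of lz_term & lz_term
  | TMul of lz_term & lz_term.

Inductive pe_form : Type :=
  | PEq of lz_term & lz_term
  | PAnd of pe_form & pe_form
  | POr of pe_form & pe_form
  | PEx of nat & pe_form.

Fixpoint eval_term (R : pzRingType) (zz : R) (e : nat -> R) (t : lz_term) : R :=
  match t with
  | TVar n => e n
  | TZero => 0
  | TOne => 1
  | TZ => zz
  | TAdd t1 t2 => eval_term zz e t1 + eval_term zz e t2
  | TMul t1 t2 => eval_term zz e t1 * eval_term zz e t2
  end.

Definition upd (R : Type) (e : nat -> R) (n : nat) (a : R) : nat -> R :=
  fun m => if m == n then a else e m.

Fixpoint holds (R : pzRingType) (zz : R) (e : nat -> R) (f : pe_form) : Prop :=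
  match f with
  | PEq t1 t2 => eval_term zz e t1 = eval_term zz e t2
  | PAnd f1 f2 => holds zz e f1 /\ holds zz e f2
  | POr f1 f2 => holds zz e f1 \/ holds zz e f2
  | PEx n f1 => exists a : R, holds zz (upd e n a) f1
  end.

(* Main.v *)
Require Import Defs.
From mathcomp Require Import all_boot all_order all_algebra.
From mathcomp Require Import zify.
Import GRing.Theory.
Local Open Scope ring_scope.

Definition phi0 : pe_form :=
  PEx 2 (PEx 3 (PEx 4
    (PEq (TAdd (TMul (TVar 0) (TVar 3))
               (TMul (TAdd (TMul (TVar 2) (TVar 2)) TZ) (TVar 4)))
         (TAdd (TMul (TVar 1) (TVar 3)) TOne)))).

Lemma h_nonunit (F : fieldType) (t b : {poly F}) : (t * t + 'X) * b <> 1.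
Proof.
move=> Hb.
have hn0 : t * t + 'X != 0.
  by apply/eqP => h0; move: Hb; rewrite h0 mul0r => /eqP; rewrite eq_sym oner_eq0.
have bn0 : b != 0.
  by apply/eqP => h0; move: Hb; rewrite h0 mulr0 => /eqP; rewrite eq_sym oner_eq0.
have hs : (2 <= size (t * t + 'X)%R)%N.
  have [->|tn0] := eqVneq t 0; first by rewrite mul0r add0r size_polyX.
  have st : size (t * t)%R = ((size t + size t).-1)%N by rewrite size_mul.
  have st1 : (0 < size t)%N by rewrite size_poly_gt0.
  have [s1|s2] := ltnP (size (t * t)) 2.
    by rewrite addrC size_addl size_polyX.
  have : size (t * t) != 2%N by rewrite st; rewrite -subn1; apply/eqP; lia.
  move=> sn2.
  rewrite size_addl // size_polyX.
  by rewrite ltn_neqAle eq_sym sn2 s2.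
move: (congr1 (fun p : {poly F} => size p) Hb) => /=.
rewrite size_mul // size_poly1.
have : (0 < size b)%N by rewrite size_poly_gt0.
move=> Hbp; move: hs; case: (size (t * t + 'X)%R) => [|[|n]] // _; case: (size b) Hbp => [|k] // _; by rewrite addnS.
Qed.

Theorem lemma1p3 :
  exists phi : pe_form,
    forall (F : fieldType) (x y : {poly F}) (e : nat -> {poly F}),
      e 0%N = x -> e 1%N = y ->
      (holds ('X : {poly F}) e phi <-> x <> y).
Proof.
exists phi0 => F x y e e0 e1 /=.
rewrite /upd /=; rewrite e0 e1.
split.
  move=> [t [a [b H]]] Exy; subst y.
  apply: (@h_nonunit F t b).
  by apply: (addrI (x * a)); rewrite H -Exy.
move=> /eqP; rewrite -subr_eq0 => dn0.
have [m [q Hq Hd]] := multiplicity_XsubC (x - y) 0.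
move: Hq; rewrite dn0 /= => Hq.
move: Hd; rewrite polyC0 subr0 => Hd.
have : coprimep q 'X by rewrite coprimepX.
move=> /Bezout_eq1_coprimepP [[u1 u2] /= Hu].
set t := u1 * q.
have Ht : t = 1 - u2 * 'X by rewrite /t -Hu addrK.
have cop : coprimep (x - y) (t * t + 'X).
  rewrite Hd coprimepMl; apply/andP; split.
    have -> : t * t = (u1 * q * u1) * q by rewrite /t !mulrA.
    by rewrite coprimep_addl_mul coprimepX.
  apply: coprimep_expl.
  rewrite coprimep_sym coprimepX /root.
  by rewrite Ht !hornerE subr0 mulr1 oner_eq0.
move: cop => /Bezout_eq1_coprimepP [[v1 v2] /= Hv].
exists t, v1, v2.
by rewrite -Hv (mulrC v1) (mulrC v2) mulrBl addrA (addrC (y * v1)) subrK.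
Qed.
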